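(* Let $\mathbf a=(a_0,a_1,\dots)\in\mathbb{R}^{\mathbb{N}}$. The linear centrality $f^{\mathbf a}$ satisfies the density axiom if and only if $a_k> k(a_2-a_1)+(2a_1-a_2)$ for all integers $k\ge 3$.
   Context: Graphs are finite directed graphs; $d_G(x,y)$ is the shortest directed path length from $x$ to $y$ ($\infty$ if none). For $\mathbf a\in\mathbb{R}^{\mathbb{N}}$ the linear centrality is $f^{\mathbf a}_G(i)=\sum_{k\ge 0}|\{j: d_G(j,i)=k\}|\,a_k$ (only finite distances counted). For positive integers $k,p$: a $k$-clique is a set of $k$ nodes with arcs in both directions between every pair of distinct nodes; a directed $p$-cycle is a set of $p$ nodes $z_0,\dots,z_{p-1}$ with arcs $z_j\to z_{j+1 \bmod p}$. Let $x$ be a node of the $k$-clique and $y$ a node of the $p$-cycle; $S_{xy}$ is the disjoint union of the $k$-clique and the directed $p$-cycle together with the two arcs $x\to y$ and $y\to x$. A centrality $f$ satisfies the density axiom if for every $k\ge 3$, taking $p=k$, one has $f_{S_{xy}}(x)>f_{S_{xy}}(y)$. *)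

(* Defs.v *)
From mathcomp Require Import all_boot all_order all_algebra.
Set Implicit Arguments. Unset Strict Implicit. Unset Printing Implicit Defensive.
Import Order.TTheory GRing.Theory Num.Theory.
Local Open Scope ring_scope.

(* A finite directed graph: a relation e on a finType V (e u v = arc u -> v). *)

Fixpoint walk (V : finType) (e : rel V) (n : nat) (u v : V) : bool :=
  match n with
  | 0 => u == v
  | n'.+1 => [exists w, e u w && walk e n' w v]
  end.

Definition is_dist (V : finType) (e : rel V) (u v : V) (k : nat) : bool :=
  walk e k u v && [forall m : 'I_k, ~~ walk e m u v].

(* Linear centrality f^a_G(i) = sum_k |{j : d(j,i) = k}| a_k.  Finite
   distances are < #|V|, so the sum over k < #|V| is the full sum. *)
Definition lin_cent (R : realFieldType) (a : nat -> R) (V : finType)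
  (e : rel V) (i : V) : R :=
  \sum_(k < #|V|) (#|[set j | is_dist e j i k]|)%:R * a k.

(* S_xy : disjoint union of the k-clique (inl) and the directed p-cycle (inr)
   z_0 -> z_1 -> ... -> z_{p-1} -> z_0, plus arcs x -> y and y -> x. *)
Definition S_rel (k p : nat) (x : 'I_k) (y : 'I_p) : rel ('I_k + 'I_p) :=
  fun u v =>
    match u, v with
    | inl a, inl b => a != b
    | inr a, inr b => (val b == (val a).+1 %% p)%N
    | inl a, inr b => (a == x) && (b == y)
    | inr a, inl b => (a == y) && (b == x)
    end.

Definition density_axiom (R : realFieldType) (a : nat -> R) : Prop :=
  forall (k : nat), (3 <= k)%N -> forall (x : 'I_k) (y : 'I_k),
    lin_cent a (S_rel x y) (inr y) < lin_cent a (S_rel x y) (inl x).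

(* Main.v *)
Require Import Defs.
From mathcomp Require Import all_boot all_order all_algebra.
From mathcomp Require Import zify ring lra.
Import Order.TTheory GRing.Theory Num.Theory.
Local Open Scope ring_scope.

Section Gen.
Variables (V : finType) (e : rel V) (D : V -> nat) (i : V).
Hypothesis Di : D i = 0%N.
Hypothesis Dedge : forall u w, e u w -> (D u <= (D w).+1)%N.
Hypothesis Dwit : forall u, u != i -> exists w, e u w && (D u == (D w).+1).

Lemma walk_ge n u : walk e n u i -> (D u <= n)%N.
Proof.
elim: n u => [|n IH] u /=; first by move/eqP->; rewrite Di.
case/existsP=> w /andP[euw /IH]; have := Dedge _ _ euw; lia.
Qed.

Lemma walk_D d u : D u = d -> walk e d u i.
Proof.
elim: d u => [|d IH] u /= Du.
  case: (eqVneq u i) => // /Dwit [w /andP[_ /eqP]]; lia.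
case: (eqVneq u i) => [ui|/Dwit [w /andP[euw /eqP Dw]]].
  by move: Du; rewrite ui Di.
apply/existsP; exists w; rewrite euw /=; apply: IH; lia.
Qed.

Lemma is_distE u d : is_dist e u i d = (D u == d).
Proof.
apply/idP/eqP => [/andP[W /forallP F]|<-].
  have := walk_ge _ _ W; rewrite leq_eqVlt => /orP[/eqP//|lt].
  by have := F (Ordinal lt); rewrite (walk_D _ _ erefl).
rewrite /is_dist walk_D //=; apply/forallP => m; apply/negP => /walk_ge.
have := ltn_ord m; lia.
Qed.

Lemma lin_centE (R : realFieldType) (a : nat -> R) :
  (forall u, D u < #|V|)%N -> lin_cent a e i = \sum_u a (D u).
Proof.
move=> Dlt; rewrite /lin_cent.
rewrite (partition_big (fun u => Ordinal (Dlt u)) xpredT) //=.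
apply: eq_bigr => d _.
rewrite mulr_natl -sumr_const.
rewrite big_mkcond [RHS]big_mkcond /=; apply: eq_bigr => u _.
rewrite inE is_distE -(inj_eq val_inj) /=.
by case: eqP => // ->.
Qed.
End Gen.
Definition cd (k y c : nat) : nat := if (c <= y)%N then (y - c)%N else (y + k - c)%N.

Lemma succ_mod k c : (c < k)%N -> ((c.+1 %% k = c.+1 /\ c.+1 < k) \/ (c.+1 %% k = 0 /\ c.+1 = k))%N.
Proof.
move=> ck; case: (ltnP c.+1 k) => h; first by left; rewrite modn_small.
have -> : c.+1 = k by apply/eqP; rewrite eqn_leq h ck.
by right; rewrite modnn.
Qed.

Lemma cd_lt k y c : (y < k)%N -> (c < k)%N -> (cd k y c < k)%N.
Proof. move=> yk ck; rewrite /cd; case: (leqP c y) => h; lia. Qed.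

Lemma cd_invol k y c : (y < k)%N -> (c < k)%N -> cd k y (cd k y c) = c.
Proof. rewrite /cd; case: (leqP c y) => h1 h2 h3; case: leqP; lia. Qed.

Lemma cd_y k y : cd k y y = 0%N.
Proof. by rewrite /cd leqnn subnn. Qed.

Lemma cd_succ k y c : (y < k)%N -> (c < k)%N -> c != y ->
  cd k y c = (cd k y (c.+1 %% k)).+1.
Proof.
move=> yk ck /eqP cy; have [[-> h]|[-> h]] := succ_mod _ _ ck; rewrite /cd ?leq0n;
  case: (leqP c y) => ?; try case: (leqP c.+1 y) => ?; lia.
Qed.

Lemma cd_le k y c : (y < k)%N -> (c < k)%N ->
  (cd k y c <= (cd k y (c.+1 %% k)).+1)%N.
Proof.
move=> yk ck; have [[-> h]|[-> h]] := succ_mod _ _ ck; rewrite /cd ?leq0n;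
  case: (leqP c y) => ?; try case: (leqP c.+1 y) => ?; lia.
Qed.

Lemma sum_cd (R : realFieldType) (F : nat -> R) k (y : 'I_k) :
  \sum_(c < k) F (cd k y c) = \sum_(t < k) F t.
Proof.
pose h (c : 'I_k) : 'I_k := Ordinal (@cd_lt k y c (ltn_ord y) (ltn_ord c)).
have hinj : injective h.
  apply: (can_inj (g := h)) => c; apply: val_inj => /=.
  by rewrite cd_invol.
by rewrite [RHS](reindex_inj hinj).
Qed.
Lemma sum_if (R : realFieldType) k (x : 'I_k) (u v : R) :
  \sum_(b < k) (if b == x then u else v) = u + v *+ k.-1.
Proof.
rewrite (bigD1 x) //= eqxx; congr (_ + _).
rewrite (eq_bigr (fun _ => v)); last by move=> b /negbTE ->.
by rewrite sumr_const cardC1 card_ord.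
Qed.

Lemma card_V k : #|{: 'I_k + 'I_k}| = (k + k)%N.
Proof. by rewrite card_sum !card_ord. Qed.

Lemma fx (R : realFieldType) (a : nat -> R) k (x y : 'I_k) :
  lin_cent a (S_rel x y) (inl x) = a 0%N + a 1%N *+ k.-1 + \sum_(t < k) a t.+1.
Proof.
pose D (u : 'I_k + 'I_k) := match u with inl b => if b == x then 0%N else 1%N
                       | inr c => (cd k y c).+1 end.
have yk := ltn_ord y.
rewrite (@lin_centE _ _ D).
- rewrite big_sumType /= (eq_bigr (fun b : 'I_k => if b == x then a 0%N else a 1%N)); last by move=> b _; case: (b == x).
  by rewrite sum_if (sum_cd _ (fun t => a t.+1)).
- by rewrite /D eqxx.
- move=> [b|c] [b'|c'] /=; rewrite /D.
  + by case: (b == x).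
  + by case: (b == x).
  + by case/andP=> /eqP -> _; rewrite cd_y.
  + move=> /eqP ->; exact: cd_le.
- move=> [b|c] ne.
  + have bx : b != x by apply: contra ne => /eqP ->.
    by exists (inl x); rewrite /= bx /D (negbTE bx) eqxx.
  + clear ne; case: (eqVneq c y) => [cy0|cy].
      by exists (inl x); rewrite /= cy0 !eqxx /D cd_y.
    have kp : (0 < k)%N := leq_ltn_trans (leq0n _) (ltn_ord c).
    exists (inr (Ordinal (ltn_pmod c.+1 kp))) => /=.
    by rewrite eqxx /= /D (cd_succ _ _ _ yk (ltn_ord c) cy).
- move=> [b|c]; rewrite card_V /D.
  + have := ltn_ord b; case: (b == x); lia.
  + have := @cd_lt k y c yk (ltn_ord c); lia.
Qed.

Lemma fy (R : realFieldType) (a : nat -> R) k (x y : 'I_k) (hk : (2 <= k)%N) :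
  lin_cent a (S_rel x y) (inr y) = a 1%N + a 2%N *+ k.-1 + \sum_(t < k) a t.
Proof.
pose D (u : 'I_k + 'I_k) := match u with inl b => if b == x then 1%N else 2%N
                       | inr c => cd k y c end.
have yk := ltn_ord y.
rewrite (@lin_centE _ _ D).
- rewrite big_sumType /= (eq_bigr (fun b : 'I_k => if b == x then a 1%N else a 2%N)); last by move=> b _; case: (b == x).
  by rewrite sum_if (sum_cd _ a).
- by rewrite /D cd_y.
- move=> [b|c] [b'|c'] /=; rewrite /D.
  + by case: (b == x); case: (b' == x).
  + by case/andP=> /eqP -> /eqP ->; rewrite eqxx cd_y.
  + by case/andP=> /eqP -> _; rewrite cd_y.
  + move=> /eqP ->; exact: cd_le.
- move=> [b|c] ne.
  + case: (eqVneq b x) => [->|bx].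
      by exists (inr y); rewrite /= !eqxx cd_y.
    by exists (inl x); rewrite /= bx /D (negbTE bx) eqxx.
  + have cy : c != y by apply: contra ne => /eqP ->.
    have kp : (0 < k)%N := leq_ltn_trans (leq0n _) (ltn_ord c).
    exists (inr (Ordinal (ltn_pmod c.+1 kp))) => /=.
    by rewrite eqxx /= /D (cd_succ _ _ _ yk (ltn_ord c) cy).
- move=> [b|c]; rewrite card_V /D.
  + case: (b == x); lia.
  + have := @cd_lt k y c yk (ltn_ord c); lia.
Qed.
Lemma key (R : realFieldType) (a : nat -> R) k (x y : 'I_k) : (3 <= k)%N ->
  (lin_cent a (S_rel x y) (inr y) < lin_cent a (S_rel x y) (inl x)) =
  (k%:R * (a 2%N - a 1%N) + (2 * a 1%N - a 2%N) < a k).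
Proof.
move=> hk; rewrite fx fy; last by lia.
case: k x y hk => [|n] // x y hk.
have tel : \sum_(t < n.+1) a t.+1 = \sum_(t < n.+1) a t - a 0%N + a n.+1.
  have E1 := big_ord_recl n.+1 a; have E2 := big_ord_recr n.+1 a.
  rewrite /= in E1 E2.
  have : a 0%N + \sum_(i < n.+1) a (bump 0 i) = \sum_(i < n.+1) a i + a n.+1 by rewrite -E1 -E2.
  move=> E; rewrite /bump /= in E.
  have E' : a 0%N + \sum_(i < n.+1) a i.+1 = \sum_(i < n.+1) a i + a n.+1 := E.
  rewrite -[LHS](addKr (a 0%N)) E'.
  ring.
rewrite tel /=.
rewrite -subr_gt0 [X in 0 < X](_ : _ = a n.+1 - (n.+1%:R * (a 2%N - a 1%N) + (2 * a 1%N - a 2%N))) ?subr_gt0 //.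
set S := \sum_(t < n.+1) a t.
rewrite -(mulr_natl (a 1%N)) -(mulr_natl (a 2%N)) -natr1; ring.
Qed.

Theorem proposition1 (R : realFieldType) (a : nat -> R) :
  density_axiom a <->
  (forall k : nat, (3 <= k)%N ->
     a k > k%:R * (a 2%N - a 1%N) + (2 * a 1%N - a 2%N)).
Proof.
split.
- move=> H k hk.
  have kp : (0 < k)%N by lia.
  by rewrite -(key _ a _ (Ordinal kp) (Ordinal kp) hk); apply: H.
- by move=> H k hk x y; rewrite key //; apply: H.
Qed.
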